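(* Let $G=(V,E)$ be a split graph with a split partition $(C,I)$. Let $E_S$ be the set of strong edges in an optimal solution for MaxSTC on $G$ and let $I_W$ be the vertices of $I$ that are incident to at least one edge of $E_S$. \begin{enumerate} \item If every vertex of $I_W$ misses at least three vertices of $C$ in $G$ then $E_S = E(C)$. \item If every vertex of $I_W$ misses exactly one vertex of $C$ in $G$ then $|E_S| \leq |E(C)| + \lfloor\frac{|I_W|}{2}\rfloor$. \end{enumerate}
   Context: A strong-weak labeling of the edges of a graph $G$ assigns each edge the label strong or weak; it satisfies the strong triadic closure if for any two strong edges $\{u,v\}$ and $\{v,w\}$ the edge $\{u,w\}$ exists in $G$. MaxSTC is the problem of finding a strong-weak labeling satisfying the strong triadic closure with the maximum number of strong edges. A split graph is a graph whose vertex set can be partitioned into a clique $C$ and an independent set $I$ (a split partition $(C,I)$). A vertex $u$ misses a vertex $v$ if $\{u,v\}\notin E(G)$. $E(C)$ denotes the set of edges with both endpoints in $C$. *)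

(* Defs.v *)
(* A simple graph on a finite vertex type T is a symmetric,
   irreflexive boolean relation g; edges are 2-element vertex sets. *)
From mathcomp Require Import all_boot.
Set Implicit Arguments. Unset Strict Implicit. Unset Printing Implicit Defensive.

Section Defs.
Variable T : finType.
Variable g : rel T.

Definition edges : {set {set T}} :=
  [set s : {set T} | [exists x, exists y, g x y && (s == [set x; y])]].

Definition edges_in (C : {set T}) : {set {set T}} :=
  [set s in edges | s \subset C].

(* A strong-weak labeling is given by its set S of strong edges (the other
   edges are weak). *)
Definition STC (S : {set {set T}}) : Prop :=
  S \subset edges /\
  forall u v w, u != w -> [set u; v] \in S -> [set v; w] \in S -> g u w.

Definition maxSTC_opt (S : {set {set T}}) : Prop :=
  STC S /\ forall S', STC S' -> #|S'| <= #|S|.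

Definition is_clique (C : {set T}) : Prop :=
  forall x y, x \in C -> y \in C -> x != y -> g x y.
Definition is_independent (I : {set T}) : Prop :=
  forall x y, x \in I -> y \in I -> ~~ g x y.

Definition split_partition (C I : {set T}) : Prop :=
  [disjoint C & I] /\ C :|: I = [set: T] /\ is_clique C /\ is_independent I.

Definition missed_in (u : T) (C : {set T}) : {set T} :=
  [set v in C | ~~ g u v].

Definition incident_in (I : {set T}) (S : {set {set T}}) : {set T} :=
  [set v in I | [exists s in S, v \in s]].

End Defs.

(* Main.v *)
Require Import Defs.
From mathcomp Require Import all_boot zify.

Lemma dc (aT bT : finType) (A : {set aT}) (B : {set bT}) (R : aT -> bT -> bool) :
 \sum_(a in A) #|[set b in B | R a b]| = \sum_(b in B) #|[set a in A | R a b]|.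
Proof.
have E : forall (X : finType) (D : {set X}) (P : pred X), #|[set x in D | P x]| = \sum_(x in D) (P x : nat).
  move=> X D P; rewrite -sum1dep_card big_mkcondr /=.
  by apply: eq_bigr => x _; case: (P x).
under eq_bigr => a _ do rewrite E.
under [RHS]eq_bigr => b _ do rewrite E.
exact: exchange_big.
Qed.

Lemma set2_eq {T : finType} {x y x' y' : T} :
  [set x; y] = [set x'; y'] -> (x = x' /\ y = y') \/ (x = y' /\ y = x').
Proof.
move=> E.
have hx : x \in [set x'; y'] by rewrite -E !inE eqxx.
have hy : y \in [set x'; y'] by rewrite -E !inE eqxx orbT.
have hx' : x' \in [set x; y] by rewrite E !inE eqxx.
have hy' : y' \in [set x; y] by rewrite E !inE eqxx orbT.
move: hx hy hx' hy'; rewrite !inE.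
by move=> /orP[]/eqP-> /orP[]/eqP-> /orP[]/eqP? /orP[]/eqP?; subst; auto.
Qed.

Lemma edge_g (T : finType) (g : rel T) (gs : symmetric g) x y :
  [set x; y] \in edges g -> g x y.
Proof.
rewrite inE => /existsP[x' /existsP[y' /andP[gxy /eqP E]]].
by case: (set2_eq E) => -[-> ->] //; rewrite gs.
Qed.

Theorem lemma2 (T : finType) (g : rel T)
  (g_sym : symmetric g) (g_irr : irreflexive g)
  (C I : {set T}) (hsplit : split_partition g C I)
  (ES : {set {set T}}) (hopt : maxSTC_opt g ES) :
  ((forall v, v \in incident_in I ES -> 3 <= #|missed_in g v C|) ->
     ES = edges_in g C) /\
  ((forall v, v \in incident_in I ES -> #|missed_in g v C| = 1) ->
     #|ES| <= #|edges_in g C| + #|incident_in I ES| %/ 2).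
Proof.
move: hsplit => [hdis [hcov [hcl hind]]].
move: hopt => [[hsub hstc] hmax].
have CnI : forall x, x \in C -> x \in I -> False.
  by move=> x xC xI; rewrite (disjointFr hdis xC) in xI.
have CorI : forall x, x \notin C -> x \in I.
  move=> x xC; have : x \in C :|: I by rewrite hcov inE.
  by rewrite inE (negbTE xC).
set EC := edges_in g C.
set W := EC :\: ES.
set SIp := [set p : T * T | [&& p.1 \in I, p.2 \in C & [set p.1; p.2] \in ES]].
have SIp_g : forall p, p \in SIp -> g p.1 p.2.
  move=> p; rewrite inE => /and3P[_ _ e]; apply: (@edge_g T g g_sym).
  exact: (subsetP hsub).
have SIp_inj2 : forall p q, p \in SIp -> q \in SIp -> p.2 = q.2 -> p = q.
  move=> [v a] [v' a']; rewrite !inE /= => /and3P[vI aC e1] /and3P[v'I a'C e2] E.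
  subst a'; case: (eqVneq v v') => [->//|ne]; exfalso.
  have e2' : [set a; v'] \in ES by rewrite setUC.
  by move: (hstc v a v' ne e1 e2'); rewrite (negbTE (hind v v' vI v'I)).
have SIp_IW : forall p, p \in SIp -> p.1 \in incident_in I ES.
  move=> p; rewrite !inE => /and3P[vI _ e]; rewrite vI /=.
  by apply/existsP; exists [set p.1; p.2]; rewrite e set21.
pose R := fun (p : T * T) (w : {set T}) => [exists x in missed_in g p.1 C, w == [set p.2; x]].
have Mw : forall p x, p \in SIp -> x \in missed_in g p.1 C -> [set p.2; x] \in W.
  move=> p x pS; rewrite inE => /andP[xC nvx].
  have gva := SIp_g p pS.
  move: pS; rewrite inE => /and3P[vI aC e1].
  have ax : p.2 != x by apply/eqP => E; rewrite -E gva in nvx.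
  rewrite !inE; apply/andP; split.
    apply/negP => h; have vx : p.1 != x.
      by apply/eqP => E; apply: (CnI x xC); rewrite -E.
    by move: (hstc _ _ _ vx e1 h); rewrite (negbTE nvx).
  apply/andP; split.
    by apply/existsP; exists p.2; apply/existsP; exists x; rewrite hcl // eqxx.
  by apply/subsetP => y; rewrite !inE => /orP[]/eqP->.
have Minj : forall p, p \in SIp -> {in missed_in g p.1 C &, injective (fun x => [set p.2; x])}.
  move=> p pS x y; rewrite !inE => /andP[_ nx] /andP[_ ny] E.
  case: (set2_eq E) => -[] // E1 E2.
  by rewrite -E1 (SIp_g p pS) in ny.
have degp : forall p, p \in SIp -> #|missed_in g p.1 C| <= #|[set w in W | R p w]|.
  move=> p pS; rewrite -(card_in_imset (Minj p pS)); apply: subset_leq_card.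
  apply/subsetP => w /imsetP[x xM ->]; rewrite inE Mw //.
  by apply/existsP; exists x; rewrite xM eqxx.
have degp_le : forall p, #|[set w in W | R p w]| <= #|missed_in g p.1 C|.
  move=> p; apply: leq_trans (leq_imset_card (fun x => [set p.2; x]) _).
  apply: subset_leq_card; apply/subsetP => w; rewrite inE => /andP[_ /existsP[x /andP[xM /eqP ->]]].
  by apply/imsetP; exists x.
have fib2 : forall w, w \in W -> #|[set p in SIp | R p w]| <= 2.
  move=> w; rewrite !inE => /andP[_ /andP[]].
  rewrite ?inE => /existsP[y /existsP[z /andP[_ /eqP Ew]]] _.
  have Einj : {in [set p in SIp | R p w] &, injective (fun p : T * T => p.2)}.
    by move=> p q /setIdP[pS _] /setIdP[qS _]; apply: SIp_inj2.
  rewrite -(card_in_imset Einj); apply: leq_trans (_ : #|w| <= 2).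
    apply: subset_leq_card; apply/subsetP => a /imsetP[p].
    rewrite inE => /andP[_ /existsP[x /andP[_ /eqP ->]]] ->; exact: set21.
  by rewrite Ew cards2; case: (y != z).
have ECstc : STC g EC.
  split; first by apply/subsetP => e; rewrite inE => /andP[].
  move=> u v w ne; rewrite !inE => /andP[_ s1] /andP[_ s2].
  apply: hcl => //; [exact: (subsetP s1 u (set21 u v)) | exact: (subsetP s2 w (set22 v w))].
have sub1 : ES :\: EC \subset [set [set p.1; p.2] | p in SIp].
  apply/subsetP => e; rewrite inE => /andP[eEC eES].
  have := subsetP hsub e eES; rewrite inE => /existsP[x /existsP[y /andP[gxy /eqP Ee]]].
  subst e.
  have nsub : ~~ ([set x; y] \subset C).
    by move: eEC; rewrite inE (subsetP hsub _ eES).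
  case: (boolP (x \in C)) => xC.
    have yC : y \notin C.
      apply/negP => yC; move/negP: nsub; apply.
      by apply/subsetP => z; rewrite !inE => /orP[]/eqP->.
    apply/imsetP; exists (y, x); last by rewrite /= setUC.
    by rewrite inE /= (CorI y yC) xC setUC eES.
  have xI := CorI x xC.
  have yC : y \in C.
    apply/negPn/negP => yC.
    by move: (hind x y xI (CorI y yC)); rewrite gxy.
  apply/imsetP; exists (x, y) => //.
  by rewrite inE /= xI yC eES.
have h3 : #|ES :\: EC| <= #|SIp|.
  exact: leq_trans (subset_leq_card sub1) (leq_imset_card _ _).
have cnt1 : #|ES| + #|W| <= #|EC| + #|SIp|.
  have h1 := cardsID EC ES.
  have h2 := cardsID ES EC.
  rewrite setIC -/W in h2; lia.
have dcR := @dc _ _ SIp W R.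
split.
  move=> H3.
  have A : 3 * #|SIp| <= 2 * #|W|.
    have : \sum_(p in SIp) 3 <= \sum_(p in SIp) #|[set w in W | R p w]|.
      apply: leq_sum => p pS; exact: leq_trans (H3 _ (SIp_IW p pS)) (degp p pS).
    have : \sum_(w in W) #|[set p in SIp | R p w]| <= \sum_(w in W) 2.
      by apply: leq_sum => w wW; exact: fib2.
    rewrite !sum_nat_const dcR; lia.
  have B := hmax EC ECstc.
  have S0 : #|SIp| = 0 by lia.
  have W0 : #|W| = 0 by lia.
  apply/eqP; rewrite eqEsubset -!setD_eq0; apply/andP; split; apply/eqP/cards0_eq.
    lia.
  by rewrite -/W.
move=> H1.
set X := [set p in SIp | [exists q in SIp, (q != p) && [exists w in W, R p w && R q w]]].
have key : forall p, p \in X -> exists2 q, q \in SIp & (q.2 \in missed_in g p.1 C) && (p.2 \in missed_in g q.1 C).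
  move=> p /setIdP[pS /existsP[q /andP[qS /andP[qp /existsP[w /and3P[_ Rp Rq]]]]]].
  exists q => //.
  move: Rp Rq => /existsP[x /andP[xM /eqP E1]] /existsP[y /andP[yM /eqP E2]].
  rewrite E1 in E2; case: (set2_eq E2) => -[E3 E4].
    by move: qp; rewrite (SIp_inj2 _ _ pS qS E3) eqxx.
  by rewrite -E4 E3 xM yM.
have Xinj : {in X &, injective (fun p : T * T => p.1)}.
  move=> p p' pX p'X E.
  have pS : p \in SIp by move: pX => /setIdP[].
  have p'S : p' \in SIp by move: p'X => /setIdP[].
  have [q qS /andP[q2 p2]] := key p pX.
  have [q' q'S /andP[q'2 p'2]] := key p' p'X.
  have qq : q = q'.
    apply: SIp_inj2 => //.
    have c1 : #|missed_in g p.1 C| <= 1 by rewrite H1 // SIp_IW.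
    rewrite /= -E in q'2.
    exact: (card_le1_eqP c1 _ _ q'2 q2).
  subst q'.
  have c2 : #|missed_in g q.1 C| <= 1 by rewrite H1 // SIp_IW.
  have := card_le1_eqP c2 _ _ p2 p'2.
  move=> Eb; rewrite [p]surjective_pairing [p']surjective_pairing /= E Eb.
  by [].
have XIW : #|X| <= #|incident_in I ES|.
  rewrite -(card_in_imset Xinj); apply: subset_leq_card; apply/subsetP => v /imsetP[p pX ->].
  by apply: SIp_IW; move: pX => /setIdP[].
have fibX : forall w, w \in W -> 2 * #|[set p in SIp | R p w]| <= 2 + #|[set p in X | R p w]|.
  move=> w wW; have := fib2 w wW.
  case: (leqP #|[set p in SIp | R p w]| 1) => h h2; first lia.
  suff : #|[set p in SIp | R p w]| <= #|[set p in X | R p w]| by lia.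
  apply: subset_leq_card; apply/subsetP => p /setIdP[pS Rpw].
  apply/setIdP; split => //; apply/setIdP; split => //.
  have : 0 < #|[set p in SIp | R p w] :\ p|.
    move: h; rewrite (cardsD1 p).
    have -> : p \in [set p in SIp | R p w] by apply/setIdP.
    lia.
  rewrite card_gt0 => /set0Pn[q /setD1P[qp /setIdP[qS Rqw]]].
  apply/existsP; exists q; rewrite qS qp /=; apply/existsP; exists w.
  by rewrite wW Rpw Rqw.
have s1 : #|SIp| <= \sum_(p in SIp) #|[set w in W | R p w]|.
  rewrite -sum1_card; apply: leq_sum => p pS; rewrite -(H1 _ (SIp_IW p pS)); exact: degp.
have hc : \sum_(w in W) 2 = #|W| * 2 := sum_nat_const _ _.
have s2 : 2 * \sum_(w in W) #|[set p in SIp | R p w]| <= #|W| * 2 + \sum_(w in W) #|[set p in X | R p w]|.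
  rewrite -hc -big_split big_distrr /=; apply: leq_sum => w wW; exact: fibX.
have s3 : \sum_(w in W) #|[set p in X | R p w]| <= #|X|.
  rewrite -(@dc _ _ X W R) -sum1_card; apply: leq_sum => p pX.
  have pS : p \in SIp by move: pX => /setIdP[].
  by rewrite -(H1 _ (SIp_IW p pS)); exact: degp_le.
rewrite dcR in s1.
lia.
Qed.
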